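(* Let $S=\langle x_1,\ldots,x_n\rangle$ be a right non-degenerate semigroup of skew type. Then $S$ has the over-jumping property: for every $a\in S$ and every $i\in\{1,\ldots,n\}$ there exist an integer $k\ge 1$ and $w\in S$ such that $aw=x_i^ka$.
   Context: A semigroup of skew type is a monoid $S$ with a monoid presentation $S=\langle x_1,\ldots,x_n \mid x_ix_j=x_kx_l\rangle$ consisting of $\binom{n}{2}$ relations, each of the form $x_ix_j=x_kx_l$ with $i\neq j$, $k\neq l$, such that every word $x_px_q$ with $p\neq q$ appears (as one side) in exactly one of the relations; $X=\{x_1,\ldots,x_n\}$. For $a,b\in X$, the partner of $ab$ is the other side of the unique defining relation containing $ab$ if $a\neq b$, and $ab$ itself if $a=b$. $S$ is right non-degenerate if for every $x\in X$ the map $X\to X$ sending $y$ to the first letter of the partner of $xy$ is surjective. *)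

(* Defs.v *)
From mathcomp Require Import all_boot.
Set Implicit Arguments. Unset Strict Implicit. Unset Printing Implicit Defensive.

(* A two-letter word x_p x_q is represented by the pair (p, q) : 'I_n * 'I_n.
   A defining relation x_i x_j = x_k x_l is a pair of two-letter words. *)
Definition word2 (n : nat) := ('I_n * 'I_n)%type.
Definition relation2 (n : nat) := (word2 n * word2 n)%type.

Definition skew_type (n : nat) (rels : seq (relation2 n)) : Prop :=
  [/\ size rels = 'C(n, 2),
      all (fun r : relation2 n => (r.1.1 != r.1.2) && (r.2.1 != r.2.2)) rels &
      forall p q : 'I_n, p != q ->
        count (fun r : relation2 n => (r.1 == (p, q)) || (r.2 == (p, q))) rels = 1].

Definition partner (n : nat) (rels : seq (relation2 n)) (a b : 'I_n) : word2 n :=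
  if a == b then (a, b) else
  let r := nth ((a, b), (a, b)) rels
               (find (fun r : relation2 n => (r.1 == (a, b)) || (r.2 == (a, b))) rels) in
  if r.1 == (a, b) then r.2 else r.1.

Definition right_nondegenerate (n : nat) (rels : seq (relation2 n)) : Prop :=
  forall x : 'I_n, forall z : 'I_n, exists y : 'I_n, (partner rels x y).1 = z.

(* The congruence on the free monoid (words = seq 'I_n) generated by rels;
   the monoid S is the quotient of the free monoid by this congruence. *)
Inductive mcong (n : nat) (rels : seq (relation2 n)) : seq 'I_n -> seq 'I_n -> Prop :=
  | mcong_step : forall (u v : seq 'I_n) (r : relation2 n), r \in rels ->
      mcong rels (u ++ [:: r.1.1; r.1.2] ++ v) (u ++ [:: r.2.1; r.2.2] ++ v)
  | mcong_refl : forall u, mcong rels u u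
  | mcong_sym : forall u v, mcong rels u v -> mcong rels v u
  | mcong_trans : forall u v w, mcong rels u v -> mcong rels v w -> mcong rels u w.

(* Main.v *)
Require Import Defs.
From mathcomp Require Import all_boot all_fingroup.
Set Implicit Arguments. Unset Strict Implicit.

Section Aux.
Variable n : nat.
Variable rels : seq (relation2 n).

Lemma mcong_ctx p q u v : mcong rels u v -> mcong rels (p ++ u ++ q) (p ++ v ++ q).
Proof.
elim=> [u0 v0 r rin|u0|u0 v0 _ IH|u0 v0 w0 _ IH1 _ IH2].
- rewrite !catA -(catA p u0) -(catA p u0) -!catA.
  have := @mcong_step n rels (p ++ u0) (v0 ++ q) r rin.
  by rewrite -!catA.
- exact: mcong_refl.
- exact: mcong_sym.
- exact: mcong_trans IH1 IH2.
Qed.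

Lemma mcong_l p u v : mcong rels u v -> mcong rels (p ++ u) (p ++ v).
Proof. by move=> h; have := mcong_ctx p [::] h; rewrite !cats0. Qed.

Lemma mcong_r q u v : mcong rels u v -> mcong rels (u ++ q) (v ++ q).
Proof. by move=> h; have := mcong_ctx [::] q h. Qed.

Hypothesis Hsk : skew_type rels.

Let P (a b : 'I_n) := (fun r : relation2 n => (r.1 == (a, b)) || (r.2 == (a, b))).

Lemma uniq_rel a b r1 r2 : a != b -> r1 \in rels -> P a b r1 -> r2 \in rels -> P a b r2 -> r1 = r2.
Proof.
case: Hsk => _ _ Hc ab i1 p1 i2 p2.
have := Hc a b ab; rewrite -size_filter.
case E: (filter _ rels) => [|r [|? ?]] //= _.
have m1 : r1 \in filter (P a b) rels by rewrite mem_filter p1 i1.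
have m2 : r2 \in filter (P a b) rels by rewrite mem_filter p2 i2.
rewrite /P E !inE in m1 m2.
by rewrite (eqP m1) (eqP m2).
Qed.

Lemma find_rel a b : a != b ->
  let r := nth ((a, b), (a, b)) rels (find (P a b) rels) in r \in rels /\ P a b r.
Proof.
case: Hsk => _ _ Hc ab /=.
have hh : has (P a b) rels by rewrite has_count Hc.
split; first by rewrite mem_nth // -has_find.
exact: nth_find.
Qed.

Lemma partner_cong a b u :
  mcong rels (a :: b :: u) ((partner rels a b).1 :: (partner rels a b).2 :: u).
Proof.
rewrite /partner; case: eqP => [_|/eqP ab]; first exact: mcong_refl.
have [rin rP] := find_rel ab.
set r := nth _ _ _ in rin rP *.
have st := @mcong_step n rels [::] u r rin.
rewrite /= in st.
case: ifP => [/eqP e|ne].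
  by rewrite e in st.
move: rP; rewrite /P ne /= => /eqP e.
by rewrite e in st; apply: mcong_sym.
Qed.

Lemma partner_diff a b : a != b -> (partner rels a b).1 != (partner rels a b).2.
Proof.
move=> ab; rewrite /partner (negbTE ab).
have [rin rP] := find_rel ab.
case: Hsk => _ Hall _.
have /andP[h1 h2] := allP Hall _ rin.
by case: ifP.
Qed.

Lemma partner_invol a b :
  partner rels (partner rels a b).1 (partner rels a b).2 = (a, b).
Proof.
case: (eqVneq a b) => [<-|ab]; first by rewrite /partner eqxx /= eqxx.
have cd := partner_diff ab.
have [rin rP] := find_rel ab.
set r := nth _ _ _ in rin rP.
have ep : partner rels a b = if r.1 == (a, b) then r.2 else r.1.
  by rewrite /partner (negbTE ab).
set c := (partner rels a b).1 in cd *; set d := (partner rels a b).2 in cd *.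
have [rin' rP'] := find_rel cd.
set r' := nth _ _ _ in rin' rP'.
have Pr : P c d r.
  rewrite /P; have : (c, d) = partner rels a b by rewrite /c /d; case: (partner _ _ _).
  rewrite ep; case: ifP => _ ->; by rewrite eqxx ?orbT.
have er : r' = r by apply: (uniq_rel cd).
rewrite /partner (negbTE cd) -/r' er.
have cdE : (c, d) = partner rels a b by rewrite /c /d; case: (partner _ _ _).
rewrite cdE ep.
move: rP; rewrite /P; case E: r => [r1 r2] /=.
case: (eqVneq r1 (a,b)) => [->|ne] /=.
  by case: eqP.
by move=> /eqP ->; rewrite eqxx.
Qed.

Hypothesis Hnd : right_nondegenerate rels.

Definition sg (y z : 'I_n) : 'I_n := odflt y [pick t | (partner rels y t).1 == z].

Lemma sgP y z : (partner rels y (sg y z)).1 = z.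
Proof.
rewrite /sg; case: pickP => [t /eqP //|H].
have [t Ht] := Hnd y z; by have := H t; rewrite Ht eqxx.
Qed.

Definition gz (z y : 'I_n) : 'I_n := (partner rels y (sg y z)).2.

Lemma gz_inj z : injective (gz z).
Proof.
move=> y y' e.
have := partner_invol y (sg y z); have := partner_invol y' (sg y' z).
rewrite !sgP /gz in e * => h1 h2.
rewrite e h1 in h2; by case: h2.
Qed.

Lemma gz_cong z y u : mcong rels (z :: gz z y :: u) (y :: sg y z :: u).
Proof.
apply: mcong_sym; have := partner_cong y (sg y z) u; by rewrite sgP.
Qed.

Lemma wordG (w : seq 'I_n) : exists G : 'I_n -> 'I_n, injective G /\
  forall y u, exists v, mcong rels (w ++ G y :: u) (y :: v).
Proof.
elim: w => [|z w [G [Gi HG]]].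
  by exists id; split => // y u; exists u; exact: mcong_refl.
exists (G \o gz z); split; first exact: (inj_comp Gi (@gz_inj z)).
move=> y u /=; have [v hv] := HG (gz z y) u.
exists (sg y z :: v).
apply: mcong_trans (mcong_l [:: z] hv) _.
exact: gz_cong.
Qed.

Definition pw (w : seq 'I_n) k := flatten (nseq k w).

Lemma lemA w x : exists j, (0 < j)%N /\ exists v, mcong rels (pw w j ++ [:: x]) (x :: v).
Proof.
have [G [Gi HG]] := wordG w.
have C : forall j y u, exists v, mcong rels (pw w j ++ iter j G y :: u) (y :: v).
  elim=> [|j IH] y u; first by exists u; exact: mcong_refl.
  rewrite iterSr /pw /= -catA.
  have [v1 h1] := IH (G y) u.
  have [v2 h2] := HG y v1.
  exists v2; exact: mcong_trans (mcong_l w h1) h2.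
pose p := perm Gi.
exists #[p]%g; split; first exact: order_gt0.
have e : iter #[p]%g G x = x.
  have := congr1 (fun q : {perm 'I_n} => q x) (expg_order p).
  rewrite permX perm1 /=.
  have -> : iter #[p]%g p x = iter #[p]%g G x.
    elim: #[p]%g => // k IH; by rewrite !iterS IH permE.
  done.
have [v hv] := C #[p]%g x [::].
by exists v; rewrite e in hv.
Qed.

Lemma pw_mul w j l : pw w (j * l) = pw (pw w j) l.
Proof.
elim: l => [|l IH]; first by rewrite muln0.
by rewrite mulnS /pw nseqD flatten_cat -/(pw w (j*l)) IH.
Qed.

Lemma lemD W V x : mcong rels (W ++ [:: x]) (x :: V) ->
  forall l, mcong rels (pw W l ++ [:: x]) (x :: pw V l).
Proof.
move=> h; elim=> [|l IH]; first exact: mcong_refl.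
rewrite /pw /= -catA.
apply: mcong_trans (mcong_l W IH) _.
have := mcong_r (pw V l) h. by rewrite -catA.
Qed.

Lemma mainG (a w : seq 'I_n) : exists k, (0 < k)%N /\
  exists v, mcong rels (a ++ v) (pw w k ++ a).
Proof.
elim: a w => [|x a IH] w.
  exists 1; split => //; exists (pw w 1); rewrite cats0; exact: mcong_refl.
have [j [j0 [v hv]]] := lemA w x.
have [l [l0 [v' hv']]] := IH v.
exists (j * l); split; first by rewrite muln_gt0 j0.
exists v'.
rewrite pw_mul.
apply: mcong_trans (mcong_l [:: x] hv') _.
have := mcong_r a (lemD hv l).
rewrite -catA /= => h; exact: mcong_sym h.
Qed.

End Aux.

Theorem proposition4p1 (n : nat) (rels : seq (relation2 n)) :
  skew_type rels -> right_nondegenerate rels ->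
  forall (a : seq 'I_n) (i : 'I_n),
    exists k : nat, (1 <= k)%N /\
      exists w : seq 'I_n, mcong rels (a ++ w) (nseq k i ++ a).
Proof.
move=> Hs Hn a i.
have [k [k0 [v hv]]] := mainG Hs Hn a [:: i].
exists k; split => //; exists v.
suff -> : nseq k i = pw [:: i] k by [].
by elim: k {k0 hv} => // k IH; rewrite /pw /= -/(pw _ _) -IH.
Qed.
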